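(* Let $a\in(0,1)$, $\sigma^2>0$, $M\ge1$, and let $\mu$ satisfy $0<\mu\sigma^2<2$. Then all eigenvalues of $$E_d=\begin{bmatrix}1-\mu\sigma^2&0&0\\0&(1-\mu\sigma^2)a&-\sqrt{2-2a}\\0&(1-\mu\sigma^2)a\sqrt{\tfrac{1-a}{2}}&a\end{bmatrix}$$ lie strictly inside the unit circle, and consequently the exact diffusion error $\widetilde{\mathcal{Z}}_i=[\widetilde{\mathcal{W}}_i;\widetilde{\mathcal{Y}}_i]$, which evolves as $\widetilde{\mathcal{Z}}_i=(Q_d\otimes I_M)\widetilde{\mathcal{Z}}_{i-1}$ with $\widetilde{\mathcal{Y}}_0\in\mathrm{range}(V\otimes I_M)$, converges to $0$.
   Context: Two-agent mean-square-error setting with Hessians $R_{u,1}=R_{u,2}=\sigma^2I_M$. $A=\begin{bmatrix}a&1-a\\1-a&a\end{bmatrix}$, $P=\frac12I_2$, $\bar A=(I_2+A)/2$; the symmetric positive semidefinite matrix $(P-AP)/2$ has eigendecomposition $U\Sigma U^{\mathsf T}$ and $V=U\Sigma^{1/2}U^{\mathsf T}$. $Q_d=\begin{bmatrix}(1-\mu\sigma^2)\bar A&-2V\\(1-\mu\sigma^2)V\bar A&\bar A\end{bmatrix}\in\mathbb{R}^{4\times4}$. The error vector $\widetilde{\mathcal{Z}}_i\in\mathbb{R}^{4M}$ consists of $\widetilde{\mathcal{W}}_i\in\mathbb{R}^{2M}$ followed by $\widetilde{\mathcal{Y}}_i\in\mathbb{R}^{2M}$, and the initial dual error $\widetilde{\mathcal{Y}}_0$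 lies in the range of $V\otimes I_M$ (as it does for the exact diffusion initialization $\mathcal{Y}_0=(V\otimes I_M)\mathcal{W}_0$ and dual optimum in that range). *)

(* Defs.v *)
From HB Require Import structures.
From mathcomp Require Import all_boot all_order all_algebra.
From mathcomp Require Import all_classical all_reals all_analysis.
From mathcomp Require Import complex mxtens.
Set Implicit Arguments. Unset Strict Implicit. Unset Printing Implicit Defensive.
Import Order.TTheory GRing.Theory Num.Theory.
Local Open Scope ring_scope.

Definition Amx (R : realType) (a : R) : 'M[R]_2 :=
  \matrix_(i < 2, j < 2) (if i == j then a else 1 - a).

Definition Pmx (R : realType) : 'M[R]_2 := (2^-1 : R)%:M.

Definition Abar (R : realType) (a : R) : 'M[R]_2 := 2^-1 *: (1%:M + Amx a).

Definition PAPhalf (R : realType) (a : R) : 'M[R]_2 :=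
  2^-1 *: (Pmx R - Amx a *m Pmx R).

(* V = U Sigma^{1/2} U^T (Sigma diagonal with nonnegative entries, so its
   square root is the entrywise square root) *)
Definition Vmx (R : realType) (U S : 'M[R]_2) : 'M[R]_2 :=
  U *m map_mx Num.sqrt S *m U^T.

Definition eigdecomp (R : realType) (X U S : 'M[R]_2) : Prop :=
  [/\ U *m U^T = 1%:M, U^T *m U = 1%:M, is_diag_mx S,
      (forall i, 0 <= S i i) & U *m S *m U^T = X].

(* Q_d (4 x 4, as a 2x2 block matrix), with Hessians sigma^2 I *)
Definition Qd (R : realType) (a mu s2 : R) (V : 'M[R]_2) : 'M[R]_(2 + 2) :=
  block_mx ((1 - mu * s2) *: Abar a) (- (2 : R) *: V)
           ((1 - mu * s2) *: (V *m Abar a)) (Abar a).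

Definition Ed (R : realType) (a mu s2 : R) : 'M[R]_3 :=
  \matrix_(i < 3, j < 3) nth (0 : R) (nth [::] [:: [:: 1 - mu * s2; 0; 0];
        [:: 0; (1 - mu * s2) * a; - Num.sqrt (2 - 2 * a)];
        [:: 0; (1 - mu * s2) * a * Num.sqrt ((1 - a) / 2); a]] i) j.

(* Dual part Y (last 2M entries) of Z = [W; Y] in R^{4M} *)
Definition Ypart (R : realType) (M : nat) (z : 'cV[R]_(4 * M)) : 'cV[R]_(2 * M) :=
  dsubmx (castmx (mulnDl 2 2 M, erefl 1%N) z : 'cV[R]_(2 * M + 2 * M)).

(* Main.v *)
Require Import Defs.
From HB Require Import structures.
From mathcomp Require Import all_boot all_order all_algebra.
From mathcomp Require Import all_classical all_reals all_analysis.
From mathcomp Require Import complex mxtens.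
From mathcomp Require Import ring lra.
Import Order.TTheory GRing.Theory Num.Theory.
Local Open Scope ring_scope.
Import numFieldNormedType.Exports.
Local Open Scope classical_set_scope.

Lemma geo_pert (R : realType) (c : R) (e u : nat -> R) :
  `|c| < 1 -> u n @[n --> \oo] --> 0 -> (forall n, e n.+1 = c * e n + u n) ->
  e n @[n --> \oo] --> 0.
Proof.
move=> hc hu he.
apply/cvgr0Pnorm_lt => eps eps0.
set rho := `|c|.
have rho0 : 0 <= rho by rewrite normr_ge0.
have eta0 : 0 < eps * (1 - rho) / 2 by rewrite divr_gt0 // mulr_gt0 // subr_gt0.
case: (cvgr0_norm_lt _ hu _ eta0) => N _ HN.
have bound : forall k, `|e (N + k)%N| <= rho ^+ k * `|e N| + eps / 2.
  elim=> [|k IH]; first by rewrite addn0 expr0 mul1r lerDl; lra.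
  rewrite addnS he.
  apply: (le_trans (ler_normD _ _)).
  have h1 : `|u (N + k)%N| < eps * (1 - rho) / 2 by apply: HN; rewrite /= leq_addr.
  rewrite normrM -/rho exprS.
  have h2 : rho * `|e (N + k)%N| <= rho * (rho ^+ k * `|e N| + eps / 2).
    by rewrite ler_wpM2l.
  lra.
have hg : (fun k => rho ^+ k * `|e N|) @ \oo --> 0.
  rewrite -(mul0r `|e N|); apply: cvgMr_tmp.
  by apply: cvg_expr; rewrite /rho normr_id.
have eps2 : 0 < eps / 2 by rewrite divr_gt0.
case: (cvgr0_norm_lt _ hg _ eps2) => N2 _ HN2.
exists (N + N2)%N => // n /= Hn.
have := bound (n - N)%N; rewrite subnKC; last by apply: leq_trans Hn; rewrite leq_addr.
have := HN2 (n - N)%N; rewrite /= leq_subRL ?Hn; last by apply: leq_trans Hn; rewrite leq_addr.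
move=> /(_ isT); rewrite ger0_norm ?mulr_ge0 ?exprn_ge0 //.
lra.
Qed.

Lemma rec2 (R : realType) (t d : R) (u : nat -> R) :
  0 < 1 - t + d -> 0 < 1 + t + d -> `|d| < 1 ->
  (forall n, u n.+2 = t * u n.+1 - d * u n) -> u n @[n --> \oo] --> 0.
Proof.
move=> h1 h2 hd hu.
have [dm dM] : -1 < d /\ d < 1 by move: hd; rewrite ltr_norml => /andP[].
have [hD|hD] := leP 0 (t ^+ 2 - 4 * d).
  set r := Num.sqrt (t ^+ 2 - 4 * d).
  have r0 : 0 <= r by apply: sqrtr_ge0.
  have r2 : r ^+ 2 = t ^+ 2 - 4 * d by rewrite sqr_sqrtr.
  set l1 := (t + r) / 2; set l2 := (t - r) / 2.
  have hl1 : `|l1| < 1.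
    rewrite ltr_norml /l1; apply/andP; split; nra.
  have hl2 : `|l2| < 1.
    rewrite ltr_norml /l2; apply/andP; split; nra.
  pose v n := u n.+1 - l2 * u n.
  have hv : v n @[n --> \oo] --> 0.
    apply: (@geo_pert _ l1 v (fun=> 0)) => //; first exact: cvg_cst.
    move=> n; rewrite /v hu addr0 /l1 /l2.
    have -> : d = (t ^+ 2 - r ^+ 2) / 4 by rewrite r2; field.
    by field.
  have hrec : forall n, u n.+1 = l2 * u n + v n by move=> n; rewrite /v; ring.
  exact: (@geo_pert _ l2 u v hl2 hv hrec).
pose F n := u n.+1 ^+ 2 - t * u n.+1 * u n + d * u n ^+ 2.
have hF : F n @[n --> \oo] --> 0.
  apply: (@geo_pert _ d F (fun=> 0)) => //; first exact: cvg_cst.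
  by move=> n; rewrite /F hu addr0; ring.
set k := d - t ^+ 2 / 4.
have k0 : 0 < k by rewrite /k; lra.
have hFu : forall n, k * u n ^+ 2 <= F n.
  move=> n; rewrite /F /k.
  have : 0 <= (u n.+1 - t * u n / 2) ^+ 2 by apply: sqr_ge0.
  lra.
apply/cvgr0Pnorm_lt => eps eps0.
have e0 : 0 < k * eps ^+ 2 by rewrite mulr_gt0 // exprn_gt0.
case: (cvgr0_norm_lt _ hF _ e0) => N _ HN.
exists N => // n /= Hn.
have := HN n Hn; have := hFu n => h3 h4.
have h5 : u n ^+ 2 < eps ^+ 2.
  rewrite -(ltr_pM2l k0); apply: le_lt_trans h3 _; apply: le_lt_trans (ler_norm _) h4.
rewrite ltr_norml; apply/andP; split; nra.
Qed.

Definition i0 : 'I_2 := @Ordinal 2 0 isT.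
Definition i1 : 'I_2 := @Ordinal 2 1 isT.

Lemma sum2 (V : nmodType) (F : 'I_2 -> V) : \sum_(l < 2) F l = F i0 + F i1.
Proof.
rewrite !big_ord_recr big_ord0 /= add0r.
by congr (F _ + F _); apply: val_inj.
Qed.

Lemma ord2_cases (i : 'I_2) : i = i0 \/ i = i1.
Proof. by case: i => -[|[|//]] hi; [left|right]; apply: val_inj. Qed.

Lemma Xentry (R : realType) (a : R) i j :
  PAPhalf a i j = if (i == j :> nat) then (1 - a) / 4 else - ((1 - a) / 4).
Proof.
rewrite /PAPhalf /Pmx mul_mx_scalar !mxE.
have -> : (i == j) = (i == j :> nat) by [].
case: (i == j :> nat); rewrite /= ?mulr1n ?mulr0n; by field.
Qed.

Lemma Abentry (R : realType) (a : R) i j :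
  Abar a i j = if (i == j :> nat) then (1 + a) / 2 else (1 - a) / 2.
Proof.
rewrite /Abar !mxE.
have -> : (i == j) = (i == j :> nat) by [].
case: (i == j :> nat); rewrite /= ?mulr1n ?mulr0n; by field.
Qed.

Lemma tens_entry (R : realType) (m M : nat) (K : 'M[R]_m) (z : 'cV[R]_(m * M)) k j :
  ((K *t (1%:M : 'M[R]_M)) *m z) (mxtens_index (k, j)) 0 =
  \sum_(l < m) K k l * z (mxtens_index (l, j)) 0.
Proof.
rewrite mxE (reindex (@mxtens_index m M)) /=; last first.
  by exists (@mxtens_unindex m M) => i _; [apply: mxtens_indexK | apply: mxtens_unindexK].
apply: eq_trans (_ : _ = \sum_(l < m) \sum_(j' < M)
   (K *t (1%:M : 'M[R]_M)) (mxtens_index (k, j)) (mxtens_index (l, j'))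
       * z (mxtens_index (l, j')) 0) _.
  by rewrite pair_bigA; apply: eq_bigr => -[l j'] _.
apply: eq_bigr => l _.
rewrite (bigD1 j) //= big1 ?addr0.
  by rewrite tensmxE mxE eqxx mulr1n mulr1.
by move=> j' hj'; rewrite tensmxE mxE eq_sym (negPf hj') mulr0n mulr0 mul0r.
Qed.

Lemma Ypart_entry (R : realType) (M : nat) (z : 'cV[R]_(4 * M)) (i : 'I_2) (j : 'I_M) :
  Ypart z (mxtens_index (i, j)) 0 = z (mxtens_index (rshift 2 i : 'I_4, j)) 0.
Proof.
rewrite /Ypart mxE castmxE /=; congr (z _ _); apply: val_inj => /=.
by rewrite mulnDl; ring.
by [].
Qed.

Lemma V_entry (R : realType) (a : R) U S : 0 < a -> a < 1 ->
  eigdecomp (PAPhalf a) U S ->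
  forall i j, Vmx U S i j = if (i == j :> nat) then Num.sqrt ((1 - a) / 2) / 2
                            else - (Num.sqrt ((1 - a) / 2) / 2).
Proof.
move=> ha0 ha1 [UUt UtU Sdiag Sge0 USU].
set X := PAPhalf a; set s := Num.sqrt ((1 - a) / 2).
have s0 : 0 < s by rewrite sqrtr_gt0 divr_gt0 //; lra.
have s2 : s ^+ 2 = (1 - a) / 2 by rewrite sqr_sqrtr // divr_ge0 //; lra.
have hX2 : X *m X = s ^+ 2 *: X.
  apply/matrixP => i j; rewrite mxE sum2 /X [in RHS]mxE !Xentry s2.
  by case: (ord2_cases i) => ->; case: (ord2_cases j) => -> /=; field.
have hS : S = U^T *m X *m U.
  by rewrite /X -USU !mulmxA UtU mul1mx -!mulmxA UtU mulmx1.
have hS2 : S *m S = s ^+ 2 *: S.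
  rewrite {1 2}hS -!mulmxA (mulmxA U) UUt mul1mx (mulmxA X) hX2.
  by rewrite -scalemxAl -scalemxAr mulmxA -hS.
move/is_diag_mxP: Sdiag => Sd.
have hSii : forall i, S i i * S i i = s ^+ 2 * S i i.
  move=> i; have := congr1 (fun N : 'M[R]_2 => N i i) hS2; rewrite /= !mxE sum2.
  by case: (ord2_cases i) => -> ; rewrite ?(Sd i0 i1 isT) ?(Sd i1 i0 isT) !mulr0 ?addr0 ?add0r.
have hsqrtS : map_mx Num.sqrt S = s^-1 *: S.
  apply/matrixP => i j; rewrite !mxE.
  have [eij|nij] := eqVneq (i : nat) j; last by rewrite (Sd i j nij) sqrtr0 mulr0.
  have -> : j = i by apply: val_inj.
  have : S i i * (S i i - s ^+ 2) = 0 by rewrite mulrBr hSii mulrC subrr.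
  move/eqP; rewrite mulf_eq0 => /orP[/eqP->|]; first by rewrite sqrtr0 mulr0.
  rewrite subr_eq0 => /eqP ->; rewrite sqrtr_sqr ger0_norm ?ltW //.
  by rewrite expr2 mulrA mulVf ?mul1r // gt_eqF.
move=> i j.
rewrite /Vmx hsqrtS -scalemxAr -scalemxAl USU mxE /X Xentry.
have e1a : 1 - a = 2 * s ^+ 2 by rewrite s2; field.
rewrite e1a; case: ifP => _; field; by rewrite gt_eqF.
Qed.

Lemma modes (R : realType) (a s2 mu : R) (M : nat)
  (ha0 : 0 < a) (ha1 : a < 1) (hmu0 : 0 < mu * s2) (hmu2 : mu * s2 < 2)
  (U S : 'M[R]_2) (Z : nat -> 'cV[R]_(4 * M)) :
     eigdecomp (PAPhalf a) U S ->
     (forall i, Z i.+1 = (Qd a mu s2 (Vmx U S) *t (1%:M : 'M[R]_M)) *m Z i) ->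
     forall j : 'I_M,
     let f n (k : 'I_(2 + 2)) : R := Z n (mxtens_index (k, j)) 0 in
     let c := 1 - mu * s2 in let s := Num.sqrt ((1 - a) / 2) in
     let w n i : R := f n (lshift 2 i) in let y n i : R := f n (rshift 2 i) in
     (forall n, w n.+1 i0 + w n.+1 i1 = c * (w n i0 + w n i1)) /\
     (forall n, w n.+1 i0 - w n.+1 i1 = c * a * (w n i0 - w n i1) - 2 * s * (y n i0 - y n i1)) /\
     (forall n, y n.+1 i0 + y n.+1 i1 = y n i0 + y n i1) /\
     (forall n, y n.+1 i0 - y n.+1 i1 = c * s * a * (w n i0 - w n i1) + a * (y n i0 - y n i1)).
Proof.
move=> hdec hZ j f c s w y.
have Ve := @V_entry R a U S ha0 ha1 hdec.
have Abe := @Abentry R a.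
rewrite /Qd -/c in hZ.
move: (Abar a) Abe hZ => Ab Abe hZ.
move: (Vmx U S) Ve hZ => V Ve hZ.
have Zrec : forall n k, f n.+1 k = \sum_(l < 2 + 2) (block_mx (c *: Ab) (- (2 : R) *: V)
           (c *: (V *m Ab)) Ab) k l * f n l.
  by move=> n k; rewrite /f hZ tens_entry.
rewrite /w /y; split; [|split; [|split]] => n; rewrite !Zrec !big_split_ord
  !sum2 ?block_mxEul ?block_mxEur ?block_mxEdl ?block_mxEdr !mxE ?sum2 ?Abe ?Ve /= -/s.
all: by field.
Qed.

Lemma lin_cvg (R : realType) (al be : R) (p q : nat -> R) :
  p n @[n --> \oo] --> 0 -> q n @[n --> \oo] --> 0 ->
  (al * p n + be * q n) @[n --> \oo] --> 0.
Proof.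
move=> hp hq.
have h := cvgD (@cvgMl_tmp _ _ _ _ p al 0 hp) (@cvgMl_tmp _ _ _ _ q be 0 hq).
rewrite !mulr0 addr0 in h; exact: h.
Qed.

Lemma ord4_cases (k : 'I_(2 + 2)) :
  k = lshift 2 i0 \/ k = lshift 2 i1 \/ k = rshift 2 i0 \/ k = rshift 2 i1.
Proof.
case: k => -[|[|[|[|//]]]] hk; [left|right;left|right;right;left|right;right;right];
  by apply: val_inj.
Qed.

Lemma part2 (R : realType) (a s2 mu : R) (M : nat)
  (ha0 : 0 < a) (ha1 : a < 1) (hmu0 : 0 < mu * s2) (hmu2 : mu * s2 < 2) :
  (forall (U S : 'M[R]_2) (Z : nat -> 'cV[R]_(4 * M)),
     eigdecomp (PAPhalf a) U S ->
     (forall i, Z i.+1 = (Qd a mu s2 (Vmx U S) *t (1%:M : 'M[R]_M)) *m Z i) ->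
     (exists x : 'cV[R]_(2 * M), Ypart (Z 0%N) = (Vmx U S *t (1%:M : 'M[R]_M)) *m x) ->
     Z i @[i --> \oo] --> (0 : 'cV[R]_(4 * M))).
Proof.
move=> U S Z hdec hZ [x hx].
set c := 1 - mu * s2; set s := Num.sqrt ((1 - a) / 2).
have hc : `|c| < 1 by rewrite ltr_norml /c; apply/andP; split; lra.
have [hc1 hc2] : -1 < c /\ c < 1 by move: hc; rewrite ltr_norml => /andP[].
have s2' : 2 * s ^+ 2 = 1 - a by rewrite sqr_sqrtr ?divr_ge0 //; [field | lra].
have Ve := @V_entry R a U S ha0 ha1 hdec.
have entries : forall (k : 'I_(2 + 2)) (j : 'I_M),
    (fun n => Z n (mxtens_index (k, j)) 0) @ \oo --> 0.
  move=> k j.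
  have := @modes R a s2 mu M ha0 ha1 hmu0 hmu2 U S Z hdec hZ j.
  rewrite /= -/c -/s => -[Hp [Hq [Hr Hg]]].
  pose w n i : R := Z n (mxtens_index (lshift 2 i : 'I_(2 + 2), j)) 0.
  pose y n i : R := Z n (mxtens_index (rshift 2 i : 'I_(2 + 2), j)) 0.
  pose p n := w n i0 + w n i1.
  pose q n := w n i0 - w n i1.
  pose r n := y n i0 + y n i1.
  pose g n := y n i0 - y n i1.
  have hp : p n @[n --> \oo] --> 0.
    apply: (@geo_pert _ c p (fun=> 0) hc (cvg_cst _)) => n.
    by rewrite addr0; exact: Hp.
  have r0 : r 0%N = 0.
    have ey : forall i, y 0%N i = \sum_(l < 2) Vmx U S i l * x (mxtens_index (l, j)) 0.
      by move=> i; rewrite /y -Ypart_entry hx tens_entry.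
    rewrite /r !ey !sum2 !Ve /=; ring.
  have hr : forall n, r n = 0.
    by elim=> [|n IH] //; rewrite /r Hr.
  have Jury1 : 0 < 1 - (c * a + a) + c * a by lra.
  have Jury2 : 0 < 1 + (c * a + a) + c * a.
    have : -1 * a < c * a by rewrite ltr_pM2r.
    lra.
  have Jury3 : `|c * a| < 1.
    rewrite normrM (ger0_norm (ltW ha0)).
    have : `|c| * a < 1 * a by rewrite ltr_pM2r.
    lra.
  have hq : q n @[n --> \oo] --> 0.
    apply: (@rec2 _ (c * a + a) (c * a) q Jury1 Jury2 Jury3) => n.
    rewrite /q (Hq n.+1) (Hg n) (Hq n).
    set Q := w n i0 - w n i1; set G := y n i0 - y n i1.
    apply/eqP; rewrite -subr_eq0; apply/eqP.
    transitivity (c * a * Q * (1 - a - 2 * s ^+ 2)); first by ring.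
    by rewrite s2' subrr mulr0.
  have hg : g n @[n --> \oo] --> 0.
    apply: (@rec2 _ (c * a + a) (c * a) g Jury1 Jury2 Jury3) => n.
    rewrite /g (Hg n.+1) (Hq n) (Hg n).
    set Q := w n i0 - w n i1; set G := y n i0 - y n i1.
    apply/eqP; rewrite -subr_eq0; apply/eqP.
    transitivity (c * a * G * (1 - a - 2 * s ^+ 2)); first by ring.
    by rewrite s2' subrr mulr0.
  have hr' : r n @[n --> \oo] --> 0.
    have -> : r = fun=> 0 by apply: funext => n; rewrite hr.
    exact: cvg_cst.
  case: (ord4_cases k) => [->|[->|[->|->]]].
  - have -> : (fun n => Z n (mxtens_index (lshift 2 i0 : 'I_(2 + 2), j)) 0)
        = (fun n => 2^-1 * p n + 2^-1 * q n).
      by apply: funext => n; rewrite /p /q -/(w n i0); field.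
    exact: lin_cvg.
  - have -> : (fun n => Z n (mxtens_index (lshift 2 i1 : 'I_(2 + 2), j)) 0)
        = (fun n => 2^-1 * p n + (- 2^-1) * q n).
      by apply: funext => n; rewrite /p /q -/(w n i1); field.
    exact: lin_cvg.
  - have -> : (fun n => Z n (mxtens_index (rshift 2 i0 : 'I_(2 + 2), j)) 0)
        = (fun n => 2^-1 * r n + 2^-1 * g n).
      by apply: funext => n; rewrite /r /g -/(y n i0); field.
    exact: lin_cvg.
  - have -> : (fun n => Z n (mxtens_index (rshift 2 i1 : 'I_(2 + 2), j)) 0)
        = (fun n => 2^-1 * r n + (- 2^-1) * g n).
      by apply: funext => n; rewrite /r /g -/(y n i1); field.
    exact: lin_cvg.
apply/cvgr0Pnorm_lt => eps heps.
have H : forall i : 'I_(4 * M), \forall n \near \oo, `|Z n i 0| < eps.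
  move=> i; case: (mxtens_indexP i) => k j.
  exact: (cvgr0_norm_lt _ (entries k j) _ heps).
apply: (@filterS _ _ _ (fun n => forall i, `|Z n i 0| < eps)); last first.
  exact: filter_forall H.
move=> n /= Hn.
change (mx_norm (Z n) < eps); rewrite mx_normrE.
apply: bigmax_lt => //= -[i i'] _; rewrite [i']ord1; exact: Hn.
Qed.

Local Open Scope complex_scope.
Lemma mul_rV3 (F : pzRingType) (w : 'rV[F]_3) (M : 'M[F]_3) j :
  (w *m M) ord0 j = w ord0 (@Ordinal 3 0 isT) * M (@Ordinal 3 0 isT) j
   + w ord0 (@Ordinal 3 1 isT) * M (@Ordinal 3 1 isT) j
   + w ord0 (@Ordinal 3 2 isT) * M (@Ordinal 3 2 isT) j.
Proof.
rewrite mxE !big_ord_recr big_ord0 /= add0r.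
by congr (_ * _ + _ * _ + _ * _); congr (_ _ _); apply: val_inj.
Qed.

Lemma quad_stable (R : realType) (t d : R) (lam : R[i]) :
  0 < 1 - t + d -> 0 < 1 + t + d -> `|d| < 1 ->
  lam ^+ 2 - t%:C * lam + d%:C = 0 -> `|lam| < 1.
Proof.
move=> h1 h2 hd; case: lam => x y h.
move: h; rewrite !expr2; simpc. move/eqP; rewrite eq_complex /= => /andP[/eqP hre /eqP him].
rewrite -[X in _ < X]sqrtr1 ltr_sqrt ?ltr01 //.
have [dm dM] : -1 < d /\ d < 1 by move: hd; rewrite ltr_norml => /andP[].
have : y * (2 * x - t) = 0 by rewrite -him; ring.
move/eqP; rewrite mulf_eq0 => /orP[/eqP y0|/eqP hx].
  subst y; rewrite expr0n /= addr0.
  have hd' : d = x * (t - x) by lra.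
  have f1 : 0 < (1 - x) * (1 - (t - x)) by nra.
  have f2 : 0 < (1 + x) * (1 + (t - x)) by nra.
  have xl : x < 1.
    rewrite ltNge; apply/negP => hx.
    have : 1 - (t - x) < 0.
      rewrite ltNge; apply/negP => hx'.
      have : (1 - x) * (1 - (t - x)) <= 0 by nra.
      lra.
    nra.
  have xg : -1 < x.
    rewrite ltNge; apply/negP => hx.
    have : 1 + (t - x) < 0.
      rewrite ltNge; apply/negP => hx'.
      have : (1 + x) * (1 + (t - x)) <= 0 by nra.
      lra.
    nra.
  nra.
have -> : x = t / 2 by lra.
have hy : y * y = x * x - t * x + d by lra.
rewrite !expr2 hy; have -> : x = t / 2 by lra.
lra.
Qed.

Lemma keyP1 (F : comRingType) (C A S Q lam v1 v2 : F) :
  (lam ^+ 2 - (C * A + A) * lam + C * A) * v1 =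
      (lam - A) * (lam * v1 - (v1 * (C * A) + v2 * (C * A * S)))
      + C * A * S * (lam * v2 - (v1 * - Q + v2 * A))
      + C * A * ((1 - A) - S * Q) * v1.
Proof. ring. Qed.
Lemma keyP2 (F : comRingType) (C A S Q lam v1 v2 : F) :
  (lam ^+ 2 - (C * A + A) * lam + C * A) * v2 =
      (lam - C * A) * (lam * v2 - (v1 * - Q + v2 * A))
      - Q * (lam * v1 - (v1 * (C * A) + v2 * (C * A * S)))
      + C * A * ((1 - A) - S * Q) * v2.
Proof. ring. Qed.

Lemma part1 (R : realType) (a s2 mu : R)
  (ha0 : 0 < a) (ha1 : a < 1) (hmu0 : 0 < mu * s2) (hmu2 : mu * s2 < 2) :
  (forall lam : R[i],
     eigenvalue (map_mx (fun x : R => x%:C) (Ed a mu s2)) lam -> `|lam| < 1).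
Proof.
move=> lam /eigenvalueP [v hv vnz].
have E (j : 'I_3) := congr1 (fun M : 'rV_3 => M ord0 j) hv.
have E0 := E (@Ordinal 3 0 isT); have E1 := E (@Ordinal 3 1 isT); have E2 := E (@Ordinal 3 2 isT).
move: E0 E1 E2; rewrite /= !mul_rV3 !mxE /=.
set v0 : R[i] := v ord0 _; set v1 : R[i] := v ord0 _; set v2 : R[i] := v ord0 _.
set c := 1 - mu * s2; set s := Num.sqrt ((1 - a) / 2); set q := Num.sqrt (2 - 2 * a).
have hc : `|c| < 1 by rewrite ltr_norml /c; apply/andP; split; lra.
have hsq : s * q = 1 - a.
  rewrite /s /q -sqrtrM; last by rewrite divr_ge0 //; lra.
  have -> : (1 - a) / 2 * (2 - 2 * a) = (1 - a) ^+ 2 by field.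
  by rewrite sqrtr_sqr ger0_norm //; lra.
have eCA : (c * a)%:C = c%:C * a%:C by rewrite rmorphM.
have eCAS : (c * a * s)%:C = c%:C * a%:C * s%:C by rewrite !rmorphM.
have eNq : (- q)%:C = - q%:C by rewrite rmorphN.
have eT : (c * a + a)%:C = c%:C * a%:C + a%:C by rewrite rmorphD rmorphM.
have hsqC : s%:C * q%:C = 1 - a%:C by rewrite -rmorphM hsq rmorphB rmorph1.
rewrite eCA eCAS eNq !mulr0 !addr0 !add0r.
move=> E0 E1 E2.
have [v00|v0n] := eqVneq v0 0.
  have P1 : (lam ^+ 2 - (c * a + a)%:C * lam + (c * a)%:C) * v1 = 0.
    rewrite eT eCA.
    rewrite (keyP1 _ _ _ s%:C q%:C lam v1 v2).
    by rewrite -E1 -E2 hsqC !(subrr, mulr0, mul0r, addr0).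
  have P2 : (lam ^+ 2 - (c * a + a)%:C * lam + (c * a)%:C) * v2 = 0.
    rewrite eT eCA.
    rewrite (keyP2 _ _ _ s%:C q%:C lam v1 v2).
    by rewrite -E1 -E2 hsqC !(subrr, mulr0, mul0r, addr0).
  have hP : lam ^+ 2 - (c * a + a)%:C * lam + (c * a)%:C = 0.
    have [v10|v1n] := eqVneq v1 0; last by move/eqP: P1; rewrite mulf_eq0 (negPf v1n) orbF => /eqP.
    have [v20|v2n] := eqVneq v2 0; last by move/eqP: P2; rewrite mulf_eq0 (negPf v2n) orbF => /eqP.
    move/negP: vnz; case; apply/eqP/rowP => j; rewrite mxE.
    case: j => -[|[|[|//]]] hj.
    - by rewrite -v00 /v0; congr (v _ _); apply: val_inj.
    - by rewrite -v10 /v1; congr (v _ _); apply: val_inj.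
    - by rewrite -v20 /v2; congr (v _ _); apply: val_inj.
  apply: (@quad_stable R (c * a + a) (c * a) lam _ _ _ hP).
  - have : (c * a) < 1 * a by rewrite ltr_pM2r //; move: hc; rewrite ltr_norml => /andP[].
    lra.
  - move: hc; rewrite ltr_norml => /andP[hc1 hc2].
    have : -1 * a < c * a by rewrite ltr_pM2r.
    lra.
  - rewrite normrM (ger0_norm (ltW ha0)).
    have : `|c| * a < 1 * a by rewrite ltr_pM2r.
    lra.
have hl : lam = c%:C.
  by apply: (mulIf v0n); rewrite -E0 mulrC.
rewrite hl normc_def /= expr0n /= addr0 sqrtr_sqr.
by rewrite -[1 : R[i]]/(1%:C) ltcR.
Qed.

Local Open Scope ring_scope.
Local Open Scope complex_scope.
Import numFieldNormedType.Exports.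
Local Open Scope classical_set_scope.

Theorem lemma6 (R : realType) (a s2 mu : R) (M : nat)
  (ha0 : 0 < a) (ha1 : a < 1) (hs2 : 0 < s2) (hM : (1 <= M)%N)
  (hmu0 : 0 < mu * s2) (hmu2 : mu * s2 < 2) :
  (forall lam : R[i],
     eigenvalue (map_mx (fun x : R => x%:C) (Ed a mu s2)) lam -> `|lam| < 1)
  /\
  (forall (U S : 'M[R]_2) (Z : nat -> 'cV[R]_(4 * M)),
     eigdecomp (PAPhalf a) U S ->
     (forall i, Z i.+1 = (Qd a mu s2 (Vmx U S) *t (1%:M : 'M[R]_M)) *m Z i) ->
     (exists x : 'cV[R]_(2 * M), Ypart (Z 0%N) = (Vmx U S *t (1%:M : 'M[R]_M)) *m x) ->
     Z i @[i --> \oo] --> (0 : 'cV[R]_(4 * M))).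
Proof.
split.
  exact: (@part1 R a s2 mu ha0 ha1 hmu0 hmu2).
exact: (@part2 R a s2 mu M ha0 ha1 hmu0 hmu2).
Qed.
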